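(* Let $n\ge2$ and let $\mathbf{r}\in\mathbb{R}^n$ have pairwise distinct coordinates; let $r_{(n)}=\max_ir_i$, $r_{(1)}=\min_ir_i$, and let $i^\star,j^\star$ be the indices with $r_{i^\star}=r_{(n)}$, $r_{j^\star}=r_{(1)}$. Then $$\max_{\boldsymbol{\pi}\in\Delta_n}\gamma(\boldsymbol{\pi},\mathbf{r})=\log\Big(\frac{e^{r_{(n)}}-e^{r_{(1)}}}{r_{(n)}-r_{(1)}}\Big)-\frac{e^{r_{(n)}}r_{(1)}-e^{r_{(1)}}r_{(n)}}{e^{r_{(n)}}-e^{r_{(1)}}}-1,$$ and the maximizer $\boldsymbol{\pi}^\star$ is unique and given by $$\pi^\star_{i^\star}=\frac{e^{r_{i^\star}}-e^{r_{j^\star}}-(r_{i^\star}-r_{j^\star})e^{r_{j^\star}}}{(r_{i^\star}-r_{j^\star})(e^{r_{i^\star}}-e^{r_{j^\star}})},\qquad\pi^\star_{j^\star}=1-\pi^\star_{i^\star},\qquad\pi^\star_k=0\ (k\notin\{i^\star,j^\star\}).$$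
   Context: $\Delta_n=\{\mathbf{x}\in[0,1]^n:\sum_ix_i=1\}$; $\supp(\mathbf{x})=\{i:x_i>0\}$. For $\boldsymbol{\pi}\in\Delta_n$ and $\mathbf{r}\in\mathbb{R}^n$, $\gamma(\boldsymbol{\pi},\mathbf{r})=\log\big(\sum_{i\in\supp(\boldsymbol{\pi})}\pi_ie^{r_i}\big)-\sum_{i\in\supp(\boldsymbol{\pi})}\pi_ir_i$. *)

(* Defs.v *)
From HB Require Import structures.
From mathcomp Require Import all_boot all_order all_algebra.
From mathcomp Require Import all_classical all_reals all_analysis.
Set Implicit Arguments. Unset Strict Implicit. Unset Printing Implicit Defensive.
Import Order.TTheory GRing.Theory Num.Theory.
Local Open Scope ring_scope.

Definition simplex (R : realType) (n : nat) (x : 'I_n -> R) : Prop :=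
  (forall i, 0 <= x i <= 1) /\ \sum_(i < n) x i = 1.

Definition gamma (R : realType) (n : nat) (p r : 'I_n -> R) : R :=
  ln (\sum_(i < n | 0 < p i) p i * expR (r i)) - \sum_(i < n | 0 < p i) p i * r i.

(* Main.v *)
Require Import Defs.
From HB Require Import structures.
From mathcomp Require Import all_boot all_order all_algebra.
From mathcomp Require Import all_classical all_reals all_analysis.
From mathcomp Require Import ring lra zify.
Import Order.TTheory GRing.Theory Num.Theory.
Local Open Scope ring_scope.

Section Aux.
Variable R : realType.

Lemma ln_le_sub1 (y : R) : 0 < y -> ln y <= y - 1.
Proof.
move=> y0; have := expR_ge1Dx (ln y); rewrite lnK ?posrE //; lra.
Qed.

Lemma ln_lt_sub1 (y : R) : 0 < y -> y != 1 -> ln y < y - 1.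
Proof.
move=> y0 y1; have u0 : ln y != 0.
  apply/eqP => h; move/eqP: y1; apply; by rewrite -(lnK (x:=y)) ?posrE // h expR0.
have := expR_gt1Dx u0; rewrite lnK ?posrE //; lra.
Qed.

Lemma chord (m M x : R) : m <= x -> x <= M ->
  (M - m) * expR x <= (M - x) * expR m + (x - m) * expR M.
Proof.
move=> hm hM.
have e1 : expR m = expR x * expR (m - x) by rewrite -expRD; congr expR; lra.
have e2 : expR M = expR x * expR (M - x) by rewrite -expRD; congr expR; lra.
rewrite e1 e2.
have h1 := expR_ge1Dx (m - x); have h2 := expR_ge1Dx (M - x).
have ex := expR_gt0 x.
have p1 : 0 <= (M - x) * (expR (m - x) - (1 + (m - x))) by apply: mulr_ge0; lra.
have p2 : 0 <= (x - m) * (expR (M - x) - (1 + (M - x))) by apply: mulr_ge0; lra.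
have q : 0 <= expR x * ((M - x) * (expR (m - x) - (1 + (m - x))) +
                        (x - m) * (expR (M - x) - (1 + (M - x)))).
  apply: mulr_ge0; lra.
nra.
Qed.

Lemma chord_strict (m M x : R) : m < x -> x < M ->
  (M - m) * expR x < (M - x) * expR m + (x - m) * expR M.
Proof.
move=> hm hM.
have e1 : expR m = expR x * expR (m - x) by rewrite -expRD; congr expR; lra.
have e2 : expR M = expR x * expR (M - x) by rewrite -expRD; congr expR; lra.
rewrite e1 e2.
have h1 : 1 + (m - x) < expR (m - x) by apply: expR_gt1Dx; rewrite subr_eq0 lt_eqF.
have h2 := expR_ge1Dx (M - x).
have ex := expR_gt0 x.
have p1 : 0 < (M - x) * (expR (m - x) - (1 + (m - x))) by apply: mulr_gt0; lra.
have p2 : 0 <= (x - m) * (expR (M - x) - (1 + (M - x))) by apply: mulr_ge0; lra.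
have q : 0 < expR x * ((M - x) * (expR (m - x) - (1 + (m - x))) +
                        (x - m) * (expR (M - x) - (1 + (M - x)))).
  apply: mulr_gt0; lra.
nra.
Qed.

Lemma sum_filter n (p f : 'I_n -> R) : (forall i, 0 <= p i) ->
  \sum_(i < n | 0 < p i) p i * f i = \sum_(i < n) p i * f i.
Proof.
move=> h; rewrite [RHS](bigID (fun i => 0 < p i)) /= [X in _ = _ + X]big1 ?addr0 // => i.
rewrite -leNgt => hi; have -> : p i = 0 by apply/le_anti; rewrite hi h.
by rewrite mul0r.
Qed.

Lemma sum2 n (q f : 'I_n -> R) (i j : 'I_n) : i != j ->
  (forall k, k != i -> k != j -> q k = 0) ->
  \sum_(k < n) q k * f k = q i * f i + q j * f j.
Proof.
move=> ij h; rewrite (bigD1 i) //= (bigD1 j) /=; last by rewrite eq_sym.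
rewrite big1 ?addr0 ?addrA // => k /andP [kj ki].
by rewrite h // mul0r.
Qed.

End Aux.

Theorem mainTheorem16 (R : realType) (n : nat) (r : 'I_n -> R)
  (istar jstar : 'I_n) :
  (2 <= n)%N ->
  injective r ->
  (forall k, r k <= r istar) ->
  (forall k, r jstar <= r k) ->
  let V := ln ((expR (r istar) - expR (r jstar)) / (r istar - r jstar))
           - (expR (r istar) * r jstar - expR (r jstar) * r istar)
             / (expR (r istar) - expR (r jstar)) - 1 in
  let a := (expR (r istar) - expR (r jstar) - (r istar - r jstar) * expR (r jstar))
           / ((r istar - r jstar) * (expR (r istar) - expR (r jstar))) in
  let pistar : 'I_n -> R :=
    fun k => if k == istar then a else if k == jstar then 1 - a else 0 in
  [/\ simplex pistar,
      gamma pistar r = V,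
      (forall p, simplex p -> gamma p r <= V) &
      (forall p, simplex p -> gamma p r = V -> p = pistar)].
Proof.
move=> n2 rinj hi hj V a pistar.
have ij : istar != jstar.
  apply/negP => /eqP e.
  have [k ki] : exists k : 'I_n, k != istar.
    have h0 : (0 < n)%N by lia.
    have h1 : (1 < n)%N by lia.
    case: (eqVneq (Ordinal h0) istar) => e0.
      by exists (Ordinal h1); apply/negP => /eqP e1; move: e0; rewrite -e1.
    by exists (Ordinal h0).
  move/negP: ki; apply; apply/eqP; apply: rinj; apply/le_anti.
  by rewrite hi /= e hj.
have mM : r jstar < r istar.
  rewrite lt_neqAle hi andbT; apply/negP => /eqP e.
  by move/negP: ij; apply; apply/eqP; apply: rinj.
set M := r istar in mM hi V a pistar *.
set m := r jstar in mM hj V a pistar *.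
set eM := expR M in V a pistar *.
set em := expR m in V a pistar *.
have d0 : 0 < M - m by lra.
have emM : em < eM by rewrite ltr_expR.
have em0 : 0 < em by apply: expR_gt0.
have eMe : eM = em * expR (M - m) by rewrite /eM /em -expRD; congr expR; lra.
have emE : em = eM * expR (- (M - m)) by rewrite /eM /em -expRD; congr expR; lra.
have h1 := expR_ge1Dx (M - m).
have h2 := expR_ge1Dx (- (M - m)).
have lo : (M - m) * em <= eM - em by nra.
have up : eM - em <= (M - m) * eM by nra.
set B := (eM - em) / (M - m).
have B0 : 0 < B by apply: divr_gt0; lra.
have dne : M - m != 0 by lra.
have ene : eM - em != 0 by lra.
have Vform : V = ln B + (em / B - m - 1).
  have hA : (eM * m - em * M) / (eM - em) = m - em / B.
    by rewrite /B; field; apply/andP; split.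
  rewrite /V hA; lra.
have aE : a * (eM - em) = B - em by rewrite /a /B; field; apply/andP; split.
have a0 : 0 <= a.
  rewrite /a; apply: divr_ge0; first lra.
  apply: mulr_ge0; lra.
have a1 : a <= 1.
  rewrite /a ler_pdivrMr; last by apply: mulr_gt0; lra.
  lra.
have pi0 : forall k, k != istar -> k != jstar -> pistar k = 0.
  by move=> k ki kj; rewrite /pistar (negbTE ki) (negbTE kj).
have piI : pistar istar = a by rewrite /pistar eqxx.
have piJ : pistar jstar = 1 - a by rewrite /pistar eq_sym (negbTE ij) eqxx.
have spi : simplex pistar.
  split.
    move=> k; rewrite /pistar; case: ifP => _; first by rewrite a0 a1.
    case: ifP => _; apply/andP; split; lra.
  have := @sum2 R n pistar (fun _ => 1) _ _ ij pi0; rewrite piI piJ.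
  under eq_bigr do rewrite mulr1.
  move=> ->; lra.
have gpi : gamma pistar r = V.
  rewrite /gamma !sum_filter; last by case: spi => h _ k; case/andP: (h k).
  2: by case: spi => h _ k; case/andP: (h k).
  rewrite !(@sum2 R n pistar _ _ _ ij pi0) piI piJ -/M -/m -/eM -/em.
  have -> : a * eM + (1 - a) * em = B.
    by rewrite /B /a; field; apply/andP; split.
  rewrite Vform.
  suff : - (a * M + (1 - a) * m) = em / B - m - 1 by lra.
  by rewrite /B /a; field; apply/andP; split.
have key : forall p, simplex p -> gamma p r <= V /\ (gamma p r = V -> p = pistar).
  move=> p [p01 p1].
  have p0 : forall i, 0 <= p i by move=> i; case/andP: (p01 i).
  set E := \sum_(i < n) p i * expR (r i).
  set L := \sum_(i < n) p i * r i.
  have gE : gamma p r = ln E - L by rewrite /gamma !sum_filter.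
  have E0 : 0 < E.
    apply: (lt_le_trans em0).
    have -> : em = \sum_(i < n) p i * em by rewrite -mulr_suml p1 mul1r.
    apply: ler_sum => i _; apply: ler_wpM2l => //.
    by rewrite /em ler_expR.
  pose g i := (M - r i) * em + (r i - m) * eM - (M - m) * expR (r i).
  have hS : \sum_(i < n) p i * g i = (M - L) * em + (L - m) * eM - (M - m) * E.
    rewrite (eq_bigr (fun i => (M * em - m * eM) * p i + (eM - em) * (p i * r i)
         - (M - m) * (p i * expR (r i)))); last by move=> i _; rewrite /g; ring.
    rewrite sumrB big_split /= -!mulr_sumr p1 -/E -/L; ring.
  have g0 : forall i, 0 <= g i.
    by move=> i; rewrite /g subr_ge0; apply: chord.
  have S0 : 0 <= \sum_(i < n) p i * g i by apply: sumr_ge0 => i _; apply: mulr_ge0.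
  have EB0 : 0 < E / B by apply: divr_gt0.
  have lnE : ln E = ln B + ln (E / B).
    by rewrite -lnM ?posrE // mulrC divfK //; lra.
  have lnle := @ln_le_sub1 R _ EB0.
  have idt : E / B - L - (em / B - m) =
      - ((M - L) * em + (L - m) * eM - (M - m) * E) / (eM - em).
    by rewrite /B; field; apply/andP; split.
  have N0 : - ((M - L) * em + (L - m) * eM - (M - m) * E) / (eM - em) <= 0.
    by rewrite ler_pdivrMr ?mul0r; lra.
  split; first by rewrite gE lnE Vform; lra.
move=> eqV.
  set Np := (M - L) * em + (L - m) * eM - (M - m) * E in hS idt N0.
  have hX : - Np / (eM - em) = 0.
    move: eqV; rewrite gE lnE Vform => eqV; lra.
  have hN : Np = 0.
    move/eqP: hX; rewrite mulf_eq0 invr_eq0 (negbTE ene) orbF oppr_eq0.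
    by move/eqP.
  have EB1 : E / B = 1.
    case: (eqVneq (E / B) 1) => // ne.
    have := @ln_lt_sub1 R _ EB0 ne.
    move: eqV; rewrite gE lnE Vform => eqV; lra.
  have E_B : E = B.
    have Bne : B != 0 by lra.
    by rewrite -[E](divfK Bne) EB1 mul1r.
  have pg : forall i, p i * g i = 0.
    move=> i.
    apply: (@psumr_eq0P _ _ (fun _ => true) (fun i => p i * g i)) => //.
      by move=> j _; apply: mulr_ge0.
    by rewrite hS.
  have pk : forall k, k != istar -> k != jstar -> p k = 0.
    move=> k ki kj.
    have rM : r k < M.
      rewrite lt_neqAle hi andbT; apply/negP => /eqP e.
      by move/negP: ki; apply; apply/eqP; apply: rinj.
    have rm : m < r k.
      rewrite lt_neqAle hj andbT; apply/negP => /eqP e.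
      by move/negP: kj; apply; apply/eqP; apply: rinj.
    have gk : 0 < g k by rewrite /g subr_gt0; apply: chord_strict.
    move/eqP: (pg k); rewrite mulf_eq0 => /orP [/eqP //|/eqP gk0].
    by move: gk; rewrite gk0 ltxx.
  have := @sum2 R n p (fun _ => 1) _ _ ij pk.
  under eq_bigr do rewrite mulr1.
  rewrite p1 !mulr1 => pIJ.
  have EE : E = p istar * eM + p jstar * em by rewrite /E (@sum2 R n p _ _ _ ij pk).
  have pIa : p istar = a.
    apply: (mulIf ene); rewrite aE -E_B EE.
    have -> : p jstar = 1 - p istar by lra.
    ring.
  apply/funext => k; rewrite /pistar.
  case: eqVneq => [->|ki] //; case: eqVneq => [->|kj]; first lra.
  exact: pk.
split => //.
  by move=> p /key [].
by move=> p /key [].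
Qed.
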